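(* Let $d\ge 3$. There exist constants $C>1$ and $c\in(0,1)$ depending only on $d$ such that the following holds for every finite field $\mathbb F_q$ of characteristic greater than two. For $j\in\mathbb F_q$ let $S_j=\{x\in\mathbb F_q^d: x_1^2+\cdots+x_d^2=j\}$. Let $i,j\in\mathbb F_q^*$, $E\subset S_i$ and $F\subset S_j$. If $|E||F|\ge Cq^d$, then $|\mathcal D(E,F)|\ge c\,q$.
   Context: $\mathbb F_q$ is a finite field with $q$ elements and characteristic greater than two; $\mathbb F_q^*=\mathbb F_q\setminus\{0\}$. For $\alpha\in\mathbb F_q^d$, $\|\alpha\|=\alpha_1^2+\cdots+\alpha_d^2\in\mathbb F_q$, and for $E,F\subset\mathbb F_q^d$ the distance set is $\mathcal D(E,F)=\{\|x-y\|: x\in E,\ y\in F\}\subset\mathbb F_q$. *)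

(* Defs.v *)
From mathcomp Require Import all_boot all_order all_algebra all_field.
From Stdlib Require Import Reals.
Set Implicit Arguments. Unset Strict Implicit. Unset Printing Implicit Defensive.
Import GRing.Theory.
Local Open Scope ring_scope.

Definition sqnorm (F : finFieldType) (d : nat) (a : 'rV[F]_d) : F :=
  \sum_(k < d) a 0 k ^+ 2.

Definition sphere (F : finFieldType) (d : nat) (j : F) : {set 'rV[F]_d} :=
  [set x | sqnorm x == j].

Definition dist_set (F : finFieldType) (d : nat) (E G : {set 'rV[F]_d}) : {set F} :=
  [set sqnorm (x - y) | x in E, y in G].

(* Main.v *)
Require Import Defs.
From mathcomp Require Import all_boot all_order all_algebra all_field.
From mathcomp Require Import ring lra.
Set Implicit Arguments. Unset Strict Implicit. Unset Printing Implicit Defensive.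
Import Order.TTheory GRing.Theory Num.Theory.
Open Scope ring_scope.

Lemma cs_sum (T : finType) (A : {pred T}) (a : T -> rat) :
  (\sum_(x in A) a x) ^+ 2 <= #|A|%:R * \sum_(x in A) a x ^+ 2.
Proof.
have H0 : 0 <= \sum_(x in A) \sum_(y in A) (a x - a y) ^+ 2.
  by apply: sumr_ge0 => x _; apply: sumr_ge0 => y _; apply: sqr_ge0.
set S := \sum_(i in A) a i; set S2 := \sum_(i in A) a i ^+ 2.
have E1 : forall x, \sum_(y in A) (a x - a y) ^+ 2 =
   #|A|%:R * a x ^+ 2 + S2 - 2 * a x * S.
  move=> x.
  rewrite (eq_bigr (fun y => (a x ^+ 2 + a y ^+ 2) - 2 * a x * a y)); last first.
    by move=> y _; rewrite sqrrB; ring.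
  by rewrite sumrB big_split /= sumr_const -mulr_sumr -[_ *+ #|A|]mulr_natl.
have E2 : \sum_(x in A) (#|A|%:R * a x ^+ 2 + S2 - 2 * a x * S) =
   #|A|%:R * S2 + #|A|%:R * S2 - 2 * S * S.
  by rewrite sumrB big_split /= sumr_const -mulr_sumr -mulr_suml -mulr_sumr -[S2 *+ #|A|]mulr_natl.
rewrite (eq_bigr _ (fun x _ => E1 x)) E2 in H0.
rewrite expr2; lra.
Qed.

Lemma card_sum (T : finType) (B : {pred T}) (P : pred T) :
  #|[set y in B | P y]| = (\sum_(y in B) (P y : nat))%N.
Proof.
rewrite -sum1_card [LHS]big_mkcond [RHS]big_mkcond /=; apply: eq_bigr => y _.
by rewrite inE; case: (y \in B); case: (P y).
Qed.

Lemma dcount (T U : finType) (A : {pred T}) (B : {pred U}) (R : T -> U -> bool) :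
  (\sum_(x in A) #|[set y in B | R x y]| = \sum_(y in B) #|[set x in A | R x y]|)%N.
Proof.
under eq_bigr do rewrite card_sum.
rewrite exchange_big /=; apply: eq_bigr => y _; by rewrite card_sum.
Qed.

Lemma sum_fiber (T U : finType) (A : {pred T}) (f : T -> U) :
  (\sum_(u : U) #|[set x in A | f x == u]| = #|A|)%N.
Proof.
rewrite -sum1_card (partition_big f predT) //=; apply: eq_bigr => u _.
by rewrite -sum1_card; apply: eq_bigl => x; rewrite inE.
Qed.

Definition dot (F : finFieldType) (d : nat) (x y : 'rV[F]_d) : F :=
  \sum_k x 0 k * y 0 k.

Lemma dotZl (F : finFieldType) (d : nat) (s : F) (x y : 'rV[F]_d) :
  dot (s *: x) y = s * dot x y.
Proof. rewrite /dot mulr_sumr; apply: eq_bigr => k _; by rewrite mxE mulrA. Qed.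

Lemma dotDl (F : finFieldType) (d : nat) (x z y : 'rV[F]_d) :
  dot (x + z) y = dot x y + dot z y.
Proof. rewrite /dot -big_split; apply: eq_bigr => k _; by rewrite mxE mulrDl. Qed.

Lemma dotBr (F : finFieldType) (d : nat) (z y y' : 'rV[F]_d) :
  dot z (y - y') = dot z y - dot z y'.
Proof. rewrite /dot -sumrB; apply: eq_bigr => k _; by rewrite !mxE mulrBr. Qed.

Lemma sqnormB (F : finFieldType) (d : nat) (x y : 'rV[F]_d) :
  sqnorm (x - y) = sqnorm x + sqnorm y - 2 * dot x y.
Proof.
rewrite /sqnorm /dot mulr_sumr -big_split -sumrB; apply: eq_bigr => k _.
rewrite !mxE /=. ring.
Qed.

Lemma sqnormZ (F : finFieldType) (d : nat) (s : F) (x : 'rV[F]_d) :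
  sqnorm (s *: x) = s ^+ 2 * sqnorm x.
Proof. rewrite /sqnorm mulr_sumr; apply: eq_bigr => k _; rewrite !mxE; ring. Qed.

Lemma card_rV (F : finFieldType) (d : nat) : #|{: 'rV[F]_d}| = (#|F| ^ d)%N.
Proof. by rewrite card_mx mul1n. Qed.

Lemma ker_card (F : finFieldType) (d : nat) (m : 'rV[F]_d) : m != 0 ->
  (#|F| * #|[set z : 'rV[F]_d | dot z m == 0%R]| <= #|F| ^ d)%N.
Proof.
move=> m0.
have [k mk] : exists k, m 0 k != 0.
  apply/existsP; apply: contraR m0 => /existsPn H; apply/eqP/rowP => k.
  by rewrite mxE; move: (H k); rewrite negbK => /eqP.
pose a : 'rV[F]_d := \row_l (if l == k then (m 0 k)^-1 else 0).
have da : dot a m = 1.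
  rewrite /dot (bigD1 k) //= big1 => [|l /negbTE lk]; last by rewrite mxE lk mul0r.
  by rewrite mxE eqxx mulVf // addr0.
have H1 : (\sum_(t : F) #|[set z in [set: 'rV[F]_d] | dot z m == t]| = #|F| ^ d)%N.
  by rewrite sum_fiber cardsT card_rV.
set K := [set z : 'rV[F]_d | dot z m == 0%R].
have -> : (#|F| * #|K| = \sum_(t : F) #|K|)%N by rewrite sum_nat_const.
rewrite -H1; apply: leq_sum => t _.
rewrite -(card_imset K (addIr (t *: a))).
apply: subset_leq_card; apply/subsetP => w /imsetP [z]; rewrite !inE => /eqP zm ->.
by rewrite dotDl dotZl zm da add0r mulr1 eqxx.
Qed.

Definition Ncnt (F : finFieldType) (d : nat) (G : {set 'rV[F]_d}) (x : 'rV[F]_d) (t : F) : nat :=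
  #|[set y in G | dot x y == t]|.
Definition S2 (F : finFieldType) (d : nat) (G : {set 'rV[F]_d}) (x : 'rV[F]_d) : nat :=
  #|[set p in setX G G | dot x p.1 == dot x p.2]|.

Lemma S2E (F : finFieldType) (d : nat) (G : {set 'rV[F]_d}) x :
  S2 G x = (\sum_t (Ncnt G x t) ^ 2)%N.
Proof.
rewrite /S2 -(sum_fiber _ (fun p => dot x p.1)); apply: eq_bigr => t _.
rewrite /Ncnt -mulnn -cardsX; apply: eq_card => -[y y']; rewrite !inE /=.
case: (y \in G); case: (y' \in G) => /=; rewrite ?andbF //.
case: (eqVneq (dot x y) t) => [->|_]; last by rewrite andbF.
by rewrite andbT eq_sym.
Qed.

Lemma S2Z (F : finFieldType) (d : nat) (G : {set 'rV[F]_d}) x s :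
  s != 0 -> S2 G (s *: x) = S2 G x.
Proof.
move=> s0; apply: eq_card => p; by rewrite !inE !dotZl (inj_eq (mulfI s0)).
Qed.

Lemma sumS2 (F : finFieldType) (d : nat) (G : {set 'rV[F]_d}) :
  (#|F| * \sum_z S2 G z <= #|G| ^ 2 * #|F| ^ d + #|F| ^ d.+1 * #|G|)%N.
Proof.
have E := dcount predT (mem (setX G G)) (fun z p => dot z p.1 == dot z p.2).
have -> : (\sum_z S2 G z = \sum_(p in setX G G) #|[set z in predT | dot z p.1 == dot z p.2]|)%N.
  by rewrite -E.
rewrite big_distrr /=.
apply: (@leq_trans (\sum_(p in setX G G) (#|F| ^ d + #|F| ^ d.+1 * (p.1 == p.2)))%N).
  apply: leq_sum => -[y y'] _ /=.
  case: (eqVneq y y') => [->|ne].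
    rewrite ?eqxx /= muln1.
    have -> : [set z : 'rV[F]_d | dot z y' == dot z y'] = [set: 'rV[F]_d].
      by apply/setP => z; rewrite !inE eqxx.
    by rewrite cardsT card_rV -expnS leq_addl.
  rewrite /= muln0 addn0.
  have -> : [set z : 'rV[F]_d | dot z y == dot z y'] = [set z : 'rV[F]_d | dot z (y - y') == 0%R].
    by apply/setP => z; rewrite !inE dotBr subr_eq0.
  by apply: ker_card; rewrite subr_eq0.
rewrite big_split /= sum_nat_const -big_distrr /= cardsX.
rewrite -card_sum mulnn leq_add2l leq_mul2l; apply/orP; right.
rewrite -(card_imset G (fun a b (h : (a, a) = (b, b)) => congr1 fst h)).
apply: subset_leq_card; apply/subsetP => -[y y']; rewrite !inE /= => /andP [/andP [yG _] /eqP <-].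
by apply/imsetP; exists y.
Qed.

Lemma fiber2 (F : finFieldType) (d : nat) (i : F) (E : {set 'rV[F]_d}) (z : 'rV[F]_d) :
  i != 0 -> E \subset sphere d i ->
  (#|[pred p : F * 'rV[F]_d | (p.1 != 0%R) && (p.2 \in E) && (p.1 *: p.2 == z)]| <= 2)%N.
Proof.
move=> i0 sE.
set P := [pred p : F * 'rV[F]_d | _].
case: (pickP P) => [p0 Hp0 | none]; last by rewrite eq_card0.
have key : forall p, P p -> p = p0 \/ p = (- p0.1, - p0.2).
  case: p0 Hp0 => s0 x0; rewrite /P /= => /andP [/andP [s00 x0E] /eqP e0].
  case=> s x; rewrite /= => /andP [/andP [s_0 xE] /eqP e].
  have xe : x = (s^-1 * s0) *: x0.
    by rewrite -scalerA e0 -e scalerA mulVf // scale1r.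
  have nx : sqnorm x = i by move: (subsetP sE x xE); rewrite inE => /eqP.
  have nx0 : sqnorm x0 = i by move: (subsetP sE x0 x0E); rewrite inE => /eqP.
  have : (s^-1 * s0) ^+ 2 == 1.
    apply/eqP; apply: (mulIf i0); by rewrite mul1r -{2}nx -nx0 xe sqnormZ.
  rewrite sqrf_eq1 => /orP [] /eqP l.
    have ss : s0 = s by rewrite -[s0]mul1r -(mulfV s_0) -mulrA l mulr1.
    by left; rewrite xe l scale1r ss.
  have ss : s0 = - s by rewrite -[s0]mul1r -(mulfV s_0) -mulrA l mulrN1.
  by right; rewrite xe l ss opprK scaleN1r.
apply: (@leq_trans #|[set p0; (- p0.1, - p0.2)]|).
  apply: subset_leq_card; apply/subsetP => p Pp; rewrite !inE.
  by case: (key p Pp) => ->; rewrite eqxx ?orbT.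
by rewrite cards2; case: (_ != _).
Qed.

Lemma fiber_sum (F : finFieldType) (d : nat) (i : F) (E : {set 'rV[F]_d})
  (h : 'rV[F]_d -> rat) : i != 0 -> E \subset sphere d i -> (forall z, 0 <= h z) ->
  \sum_(s : F | s != 0) \sum_(x in E) h (s *: x) <= 2 * \sum_z h z.
Proof.
move=> i0 sE h0.
rewrite pair_big_dep /= (partition_big (fun p => p.1 *: p.2) predT) //=.
rewrite mulr_sumr; apply: ler_sum => z _.
rewrite (eq_bigr (fun _ => h z)); last by move=> p /andP [_ /eqP ->].
rewrite sumr_const -[h z *+ _]mulr_natl; apply: ler_wpM2r => //; rewrite ler_nat.
apply: leq_trans (fiber2 z i0 sE); apply: subset_leq_card; apply/subsetP => p.
by rewrite !inE.
Qed.

Lemma var_id (T : finType) (a : T -> rat) :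
  \sum_t (#|T|%:R * a t - \sum_u a u) ^+ 2 =
  #|T|%:R ^+ 2 * \sum_t a t ^+ 2 - #|T|%:R * (\sum_u a u) ^+ 2.
Proof.
set n := #|T|%:R; set S := \sum_u a u.
rewrite (eq_bigr (fun t => n ^+ 2 * a t ^+ 2 + S ^+ 2 - 2 * n * S * a t)); last first.
  by move=> t _; rewrite sqrrB; ring.
rewrite sumrB big_split /= sumr_const -!mulr_sumr -/S -mulr_natl -/n; ring.
Qed.

Lemma main_count (F : finFieldType) (d : nat) (i : F) (E G : {set 'rV[F]_d}) :
  i != 0 -> E \subset sphere d i -> (4 * #|F| ^ d <= #|E| * #|G|)%N ->
  (#|F| <= 2 * #|[set dot x y | x in E, y in G]|)%N.
Proof.
move=> i0 sE hEG.
set q : rat := #|F|%:R; set e : rat := #|E|%:R; set g : rat := #|G|%:R.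
set P : rat := q ^+ d.
pose N x t : rat := (Ncnt G x t)%:R.
pose nu t : rat := \sum_(x in E) N x t.
pose Q : rat := \sum_t nu t ^+ 2.
pose Var x : rat := \sum_t (q * N x t - g) ^+ 2.
have f1 : forall x, \sum_t N x t = g.
  by move=> x; rewrite /N -natr_sum /Ncnt sum_fiber.
have f2 : forall x, Var x = q ^+ 2 * (S2 G x)%:R - q * g ^+ 2.
  move=> x; rewrite /Var -{1}(f1 x) var_id -/q f1 S2E natr_sum.
  by congr (_ * _ - _); apply: eq_bigr => t _; rewrite natrX.
have f3 : \sum_t nu t = e * g.
  rewrite /nu exchange_big /= (eq_bigr (fun _ => g)); last by move=> x _; rewrite f1.
  by rewrite sumr_const -mulr_natl.
have f4 : \sum_t (q * nu t - e * g) ^+ 2 = q ^+ 2 * Q - q * (e * g) ^+ 2.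
  by rewrite -f3 var_id.
have f5 : \sum_t (q * nu t - e * g) ^+ 2 <= e * \sum_(x in E) Var x.
  rewrite /Var exchange_big /= mulr_sumr; apply: ler_sum => t _.
  have -> : q * nu t - e * g = \sum_(x in E) (q * N x t - g).
    by rewrite sumrB mulr_sumr sumr_const -mulr_natl.
  exact: cs_sum.
have q2 : (2 <= #|F|)%N.
  by have := max_card (mem [set (0:F); 1]); rewrite cards2 eq_sym oner_neq0.
have q2r : 2 <= q by rewrite /q (ler_nat rat 2).
have VarZ : forall s x, s != 0 -> Var (s *: x) = Var x.
  by move=> s x s0; rewrite !f2 S2Z.
have Vge0 : forall z, 0 <= Var z.
  by move=> z; apply: sumr_ge0 => t _; apply: sqr_ge0.
have f6 : (q - 1) * \sum_(x in E) Var x <= 2 * \sum_z Var z.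
  have := fiber_sum i0 sE Vge0.
  rewrite (eq_bigr (fun _ => \sum_(x in E) Var x)); last first.
    by move=> s s0; apply: eq_bigr => x _; rewrite VarZ.
  rewrite sumr_const cardC1 -[_ *+ #|F|.-1]mulr_natl -subn1 natrB //; by apply: leq_trans q2.
have f7 : \sum_z Var z <= q ^+ 2 * P * g.
  rewrite (eq_bigr _ (fun z _ => f2 z)) sumrB sumr_const -mulr_sumr.
  have HS := sumS2 G.
  move: HS; rewrite -(ler_nat rat) natrM natrD !natrM !natrX natr_sum -/q -/g exprS -/P => HS.
  have HS2 := ler_wpM2l (ler0n _ #|F|) HS.
  rewrite card_rV -mulr_natl natrX -/q -/P.
  move: HS2; rewrite -/(\sum_z (S2 G z)%:R). nra.
set D' := [set dot x y | x in E, y in G].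
have nu0 : forall t, t \notin D' -> nu t = 0.
  move=> t tD; rewrite /nu big1 // => x xE; rewrite /N /Ncnt.
  have -> : [set y in G | dot x y == t] = set0.
    apply/setP => y; rewrite !inE; apply/negP => /andP [yG /eqP et].
    by move/negP: tD; apply; rewrite -et; apply/imset2P; exists x y.
  by rewrite cards0.
have f9 : (e * g) ^+ 2 <= #|D'|%:R * Q.
  rewrite -f3 (bigID (mem D')) /= [X in _ + X]big1 ?addr0; last by move=> t /nu0.
  apply: le_trans (cs_sum _ _) _.
  apply: ler_wpM2l => //; rewrite /Q [X in _ <= X](bigID (mem D')) /= lerDl.
  by apply: sumr_ge0 => t _; apply: sqr_ge0.
set VE := \sum_(x in E) Var x; set VZ := \sum_z Var z.
have X0 : 0 <= q ^+ 2 * Q - q * (e * g) ^+ 2.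
  by rewrite -f4; apply: sumr_ge0 => t _; apply: sqr_ge0.
have VE0 : 0 <= VE by apply: sumr_ge0 => x _.
have e0 : 0 <= e by rewrite ler0n.
have g0 : 0 <= g by rewrite ler0n.
have P0 : 0 <= P by rewrite exprn_ge0 // ler0n.
have hEGr : 4 * P <= e * g.
  by move: hEG; rewrite -(ler_nat rat) !natrM natrX.
set X := q ^+ 2 * Q - q * (e * g) ^+ 2.
have s1 : (q - 1) * X <= (q - 1) * (e * VE).
  by apply: ler_wpM2l; [lra | rewrite /X -f4].
have s2 : e * ((q - 1) * VE) <= e * (2 * VZ) by apply: ler_wpM2l.
have s3 : e * (2 * VZ) <= e * (2 * (q ^+ 2 * P * g)).
  by apply: ler_wpM2l => //; apply: ler_wpM2l.
have s4 : q * X <= 2 * ((q - 1) * X).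
  have : 0 <= (q - 2) * X by apply: mulr_ge0 => //; lra.
  lra.
have s5 : q * X <= 4 * e * g * q ^+ 2 * P.
  have : (q - 1) * X <= e * (2 * (q ^+ 2 * P * g)) by lra.
  lra.
have q0 : 0 < q by lra.
have s6 : q * Q - (e * g) ^+ 2 <= 4 * e * g * P.
  rewrite -(ler_pM2l (exprn_gt0 2 q0)).
  move: s5; rewrite /X. nra.
have s7 : q * Q <= 2 * (e * g) ^+ 2.
  have : (e * g) * (4 * P) <= (e * g) * (e * g) by apply: ler_wpM2l => //; apply: mulr_ge0.
  rewrite expr2; lra.
have P0' : 0 < P by apply: exprn_gt0.
have eg0 : 0 < (e * g) ^+ 2 by apply: exprn_gt0; lra.
have D0 : 0 <= (#|D'|%:R : rat) by apply: ler0n.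
have s8 : q * (e * g) ^+ 2 <= (2 * #|D'|%:R) * (e * g) ^+ 2.
  have := ler_wpM2l (ltW q0) f9.
  have := ler_wpM2l D0 s7.
  nra.
rewrite -(ler_nat rat) natrM.
by move: s8; rewrite ler_pM2r.
Qed.

From Stdlib Require Import Reals Lra.
Close Scope ring_scope.

Lemma INR_muln (m n : nat) : INR (muln m n) = (INR m * INR n)%R.
Proof. by rewrite mulnE mult_INR. Qed.

Lemma INR_expn (m n : nat) : INR (expn m n) = (INR m ^ n)%R.
Proof.
elim: n => [|n IH]; first by rewrite expn0.
by rewrite expnS INR_muln IH /=.
Qed.

Theorem theorem3p3 (d : nat) (hd : (3 <= d)%N) :
  exists (C c : R), (1 < C)%R /\ (0 < c < 1)%R /\
    forall (F : finFieldType),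
      (forall p : nat, p \in GRing.pchar F -> (2 < p)%N) ->
      forall (i j : F) (E G : {set 'rV[F]_d}),
        i != GRing.zero -> j != GRing.zero ->
        E \subset sphere d i -> G \subset sphere d j ->
        (C * INR #|F| ^ d <= INR (#|E| * #|G|))%R ->
        (c * INR #|F| <= INR #|dist_set E G|)%R.
Proof.
exists 4%R, (/2)%R; split; [Lra.lra|]; split; [Lra.lra|].
move=> F hch i j E G i0 j0 sE sG hC.
Open Scope ring_scope.
have two0 : (2%:R : F) != 0.
  apply/negP => /eqP h2.
  have h : 2 \in GRing.pchar F by rewrite inE /= h2 eqxx.
  by have := hch 2 h.
have card_eq : #|dist_set E G| = #|[set dot x y | x in E, y in G]|.
  have -> : dist_set E G = (fun t => i + j - 2%:R * t) @: [set dot x y | x in E, y in G].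
    apply/setP => u; apply/imset2P/imsetP.
      move=> [x y xE yG ->]; exists (dot x y); first by apply/imset2P; exists x y.
      move: (subsetP sE x xE) (subsetP sG y yG); rewrite !inE => /eqP nx /eqP ny.
      by rewrite sqnormB nx ny.
    move=> [t /imset2P [x y xE yG ->] ->]; exists x y => //.
    move: (subsetP sE x xE) (subsetP sG y yG); rewrite !inE => /eqP nx /eqP ny.
    by rewrite sqnormB nx ny.
  rewrite card_imset // => a b /= /addrI /GRing.oppr_inj.
  exact: mulfI.
have hN : leq (muln 4 (expn #|F| d)) (muln #|E| #|G|).
  apply/ssrnat.leP; apply: INR_le.
  rewrite !INR_muln INR_expn; move: hC; rewrite !INR_muln.
  have -> : INR 4 = 4%R by rewrite /=; Lra.lra.
  by [].
have := main_count i0 sE hN.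
rewrite -card_eq => /ssrnat.leP /le_INR.
rewrite INR_muln /=.
Lra.lra.
Qed.
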